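(* In the setting described in the context (iterate $(p,v)$ satisfying the centrality conditions with sufficiently small duality measure $\Xi$), suppose the condensed matrix is computed in floating-point arithmetic as $$\widehat{K}_\gamma = W + \Delta W + (A + \Delta A)^\top (D_\gamma + \Delta D_\gamma)(A + \Delta A) + (H_{\mathcal{N}} + \Delta H_{\mathcal{N}})^\top S_{\mathcal{N}}^{-1} V_{\mathcal{N}} (H_{\mathcal{N}} + \Delta H_{\mathcal{N}}),$$ with $\Delta W = O(\mathbf{u})$, $\Delta H_{\mathcal{N}} = O(\mathbf{u})$, $\Delta A = \Theta(\mathbf{u})$, $\Delta D_\gamma = O(\mathbf{u}\overline{\sigma})$. Then, neglecting second-order terms in the perturbations, the perturbation satisfies $\Delta K_\gamma := \widehat{K}_\gamma - K_\gamma = O(\mathbf{u}\overline{\sigma})$.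
   Context: Problem: minimize $f(x)$ over $x \in \mathbb{R}^n$, $s \in \mathbb{R}^{m_i}$ subject to $g(x) = 0$, $h(x)+s=0$, $s\ge0$, with $g:\mathbb{R}^n\to\mathbb{R}^{m_e}$, $h:\mathbb{R}^n\to\mathbb{R}^{m_i}$, $f$ smooth; $x$ unconstrained. Multipliers $y, z, v$; Lagrangian $L(p,v) = f(x) + y^\top g(x) + z^\top(h(x)+s) - v^\top s$, $p=(x,s,y,z)$. $(p^\star,v^\star)$ is a KKT point satisfying: $\nabla^2_{xx}L$ Lipschitz near $p^\star$, LICQ, strict complementarity and second-order sufficiency. Active set $\mathcal{B} = \{i : h_i(x^\star)=0\}$, inactive set $\mathcal{N}$. Duality measure $\Xi = s^\top v/m_i$; centrality conditions: $\|\nabla_p L(p,v)\|\le C\Xi$, $(s,v)>0$, $s_iv_i\ge\alpha\Xi$ for all $i$ ($C>0$, $\alpha\in(0,1)$ fixed). At the iterate: $W = \nabla^2_{xx}L$, $G=\nabla g(x)$, $H = \nabla h(x)$ with row blocks $H_{\mathcal{B}}, H_{\mathcal{N}}$, $A = \begin{bmatrix} H_{\mathcal{B}}\\ G\end{bmatrix}$, $S_{\mathcal{B}}, V_{\mathcal{B}}, S_{\mathcal{N}}, V_{\mathcal{N}}$ the diagonal matrices of the corresponding entries of $s$ and $v$, $D_\gamma = \begin{bmatrix} S_{\mathcal{B}}^{-1}V_{\mathcal{B}} & 0 \\ 0 & \gamma I\end{bmatrix}$ with $\gamma>0$, and condensed matrix $K_\gamma = W + H_{\mathcal{N}}^\top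 S_{\mathcal{N}}^{-1}V_{\mathcal{N}}H_{\mathcal{N}} + A^\top D_\gamma A$ ($= W + H^\top S^{-1}VH + \gamma G^\top G$). $s_{\min} = \min_{i\in\mathcal{B}} s_i$, $\overline{\sigma} = \max(1/s_{\min}, \gamma)$. $\mathbf{u}$ is the unit roundoff. $O(\cdot)$, $\Theta(\cdot)$: norm bounded above (resp. above and below) by constants independent of the iterate times the argument. *)

(* Defs.v *)
From HB Require Import structures.
From mathcomp Require Import all_boot all_order all_algebra.
From mathcomp Require Import all_classical all_reals all_analysis.
Set Implicit Arguments. Unset Strict Implicit. Unset Printing Implicit Defensive.
Import Order.TTheory GRing.Theory Num.Theory.
Import numFieldNormedType.Exports.
Local Open Scope ring_scope.

Section Defs.
Variable R : realType.

(* Jacobian in the usual (m x n) convention: row i = gradient of F_i.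
   The library's 'J F x = lin1_mx ('d F x) is n x m (acts on row vectors). *)
Definition jac n m (F : 'rV[R]_n -> 'rV[R]_m) (x : 'rV[R]_n) : 'M[R]_(m, n) :=
  ('J F x)^T.

Definition sc n (phi : 'rV[R]_n -> R) : 'rV[R]_n -> 'rV[R]_1 :=
  fun x => (phi x)%:M.

Definition grad n (phi : 'rV[R]_n -> R) (x : 'rV[R]_n) : 'rV[R]_n :=
  jac (sc phi) x.

Definition hess n (phi : 'rV[R]_n -> R) (x : 'rV[R]_n) : 'M[R]_n :=
  jac (@grad n phi) x.

Fixpoint Ck n (k : nat) : forall m, ('rV[R]_n -> 'rV[R]_m) -> Prop :=
  match k with
  | 0 => fun m F => continuous F
  | k'.+1 => fun m F =>
      (forall x, differentiable F x) /\ @Ck n k' (m * n)%N (fun x => mxvec (jac F x))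
  end.

Definition smooth n m (F : 'rV[R]_n -> 'rV[R]_m) : Prop := forall k, @Ck n k m F.

Definition dot k (a b : 'rV[R]_k) : R := \sum_(i < k) a 0 i * b 0 i.

Section Problem.
Variables (n me mi : nat) (f : 'rV[R]_n -> R) (g : 'rV[R]_n -> 'rV[R]_me)
  (h : 'rV[R]_n -> 'rV[R]_mi).

(* the x-dependent part of L(p,v) = f + y'g + z'(h+s) - v's *)
Definition lagx (y : 'rV[R]_me) (z : 'rV[R]_mi) (x : 'rV[R]_n) : R :=
  f x + dot y (g x) + dot z (h x).

Definition lag (x : 'rV[R]_n) (s : 'rV[R]_mi) (y : 'rV[R]_me) (z v : 'rV[R]_mi) : R :=
  f x + dot y (g x) + dot z (h x + s) - dot v s.

Definition Wmat (x : 'rV[R]_n) (y : 'rV[R]_me) (z : 'rV[R]_mi) : 'M[R]_n :=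
  hess (lagx y z) x.

(* norm of the gradient of L w.r.t. p = (x,s,y,z) (max of block norms):
   grad_x L, grad_s L = z - v, grad_y L = g(x), grad_z L = h(x) + s *)
Definition normgradL (x : 'rV[R]_n) (s : 'rV[R]_mi) (y : 'rV[R]_me) (z v : 'rV[R]_mi) : R :=
  Num.max (Num.max `|grad (lagx y z) x| `|z - v|) (Num.max `|g x| `|h x + s|).

Definition Xi (s v : 'rV[R]_mi) : R := dot s v / mi%:R.

Definition central (C alpha : R) (x : 'rV[R]_n) (s : 'rV[R]_mi) (y : 'rV[R]_me) (z v : 'rV[R]_mi) : Prop :=
  normgradL x s y z v <= C * Xi s v /\
  (forall i, 0 < s 0 i) /\ (forall i, 0 < v 0 i) /\
  (forall i, alpha * Xi s v <= s 0 i * v 0 i).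

Definition KKT_point (x : 'rV[R]_n) (s : 'rV[R]_mi) (y : 'rV[R]_me) (z v : 'rV[R]_mi) : Prop :=
  normgradL x s y z v = 0 /\
  (forall i, 0 <= s 0 i) /\ (forall i, 0 <= v 0 i) /\ (forall i, s 0 i * v 0 i = 0).

Definition strict_complementarity (s v : 'rV[R]_mi) : Prop :=
  forall i, 0 < s 0 i + v 0 i.

(* LICQ for the constraints g(x)=0, h(x)+s=0, s_i >= 0 (i active, s_i = 0),
   in the variables (x,s): the gradients are linearly independent. *)
Definition LICQ (x : 'rV[R]_n) (s : 'rV[R]_mi) : Prop :=
  forall (la : 'rV[R]_me) (mu nu : 'rV[R]_mi),
    (forall i, s 0 i != 0 -> nu 0 i = 0) ->
    la *m jac g x + mu *m jac h x = 0 -> mu + nu = 0 ->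
    la = 0 /\ mu = 0 /\ nu = 0.

(* second-order sufficient condition in the variables (x,s); the Hessian of L
   w.r.t. (x,s) is blockdiag(W, 0). Critical cone at a KKT point. *)
Definition SOSC (x : 'rV[R]_n) (s : 'rV[R]_mi) (y : 'rV[R]_me) (z v : 'rV[R]_mi) : Prop :=
  forall (dx : 'rV[R]_n) (ds : 'rV[R]_mi),
    (dx != 0 \/ ds != 0) ->
    dx *m (jac g x)^T = 0 ->
    dx *m (jac h x)^T + ds = 0 ->
    (forall i, s 0 i = 0 -> 0 < v 0 i -> ds 0 i = 0) ->
    (forall i, s 0 i = 0 -> v 0 i = 0 -> 0 <= ds 0 i) ->
    0 < (dx *m Wmat x y z *m dx^T) 0 0.

Definition hess_lipschitz_near (xs : 'rV[R]_n) (ys : 'rV[R]_me) (zs : 'rV[R]_mi) : Prop :=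
  exists r Lc : R, 0 < r /\ forall x1 y1 z1 x2 y2 z2,
    `|x1 - xs| <= r -> `|y1 - ys| <= r -> `|z1 - zs| <= r ->
    `|x2 - xs| <= r -> `|y2 - ys| <= r -> `|z2 - zs| <= r ->
    `|Wmat x1 y1 z1 - Wmat x2 y2 z2| <=
      Lc * Num.max `|x1 - x2| (Num.max `|y1 - y2| `|z1 - z2|).

Definition active (xs : 'rV[R]_n) : {set 'I_mi} := [set i | h xs 0 i == 0].

End Problem.

Definition subrows m k (P : {set 'I_m}) (M : 'M[R]_(m, k)) : 'M[R]_(#|P|, k) :=
  \matrix_(i < #|P|, j < k) M (enum_val i) j.
Definition subvec m (P : {set 'I_m}) (u : 'rV[R]_m) : 'rV[R]_#|P| :=
  \row_(i < #|P|) u 0 (enum_val i).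

Section Condensed.
Variables (n me mi : nat) (g : 'rV[R]_n -> 'rV[R]_me) (h : 'rV[R]_n -> 'rV[R]_mi)
  (B : {set 'I_mi}) (gamma : R).
Variables (x : 'rV[R]_n) (s v : 'rV[R]_mi).

Definition HB : 'M[R]_(#|B|, n) := subrows B (jac h x).
Definition HN : 'M[R]_(#|~: B|, n) := subrows (~: B) (jac h x).
Definition Amat : 'M[R]_(#|B| + me, n) := col_mx HB (jac g x).
Definition MN : 'M[R]_(#|~: B|) :=
  diag_mx (\row_(i < _) (((subvec (~: B) s) 0 i)^-1 * (subvec (~: B) v) 0 i)).
Definition Dg : 'M[R]_(#|B| + me) :=
  block_mx (diag_mx (\row_(i < _) (((subvec B s) 0 i)^-1 * (subvec B v) 0 i))) 0 0 (gamma%:M).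

(* sigma_bar = max(1/s_min, gamma), s_min = min_{i in B} s_i *)
Definition sigma_bar : R := \big[Num.max/gamma]_(i in B) (s 0 i)^-1.

Definition Kg (W : 'M[R]_n) : 'M[R]_n :=
  W + (HN^T *m MN *m HN) + (Amat^T *m Dg *m Amat).

Definition Khat (W dW : 'M[R]_n) (dA : 'M[R]_(#|B| + me, n))
    (dD : 'M[R]_(#|B| + me)) (dHN : 'M[R]_(#|~: B|, n)) : 'M[R]_n :=
  W + dW + ((Amat + dA)^T *m (Dg + dD) *m (Amat + dA))
    + ((HN + dHN)^T *m MN *m (HN + dHN)).

(* first-order part of Khat - K (second-order terms in the perturbations
   dropped) *)
Definition dK1 (dW : 'M[R]_n) (dA : 'M[R]_(#|B| + me, n))
    (dD : 'M[R]_(#|B| + me)) (dHN : 'M[R]_(#|~: B|, n)) : 'M[R]_n :=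
  dW + (dA^T *m Dg *m Amat) + (Amat^T *m Dg *m dA) + (Amat^T *m dD *m Amat)
     + (dHN^T *m MN *m HN) + (HN^T *m MN *m dHN).

End Condensed.

End Defs.

(* Main.v *)
Require Import Defs.
From HB Require Import structures.
From mathcomp Require Import all_boot all_order all_algebra.
From mathcomp Require Import all_classical all_reals all_analysis.
From mathcomp Require Import ring lra.
Import Order.TTheory GRing.Theory Num.Theory.
Import numFieldNormedType.Exports.
Local Open Scope ring_scope.

Section H.
Variable R : realType.

Lemma entry_le (p q : nat) (M : 'M[R]_(p, q)) i j : `|M i j| <= `|M|.
Proof.
rewrite [leRHS]/Num.Def.normr /= mx_normrE.
apply/bigmax_geP; right; exists (i,j) => //.
Qed.

Lemma norm_le_entries (p q : nat) (M : 'M[R]_(p, q)) c :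
  0 <= c -> (forall i j, `|M i j| <= c) -> `|M| <= c.
Proof.
move=> c0 H; rewrite [leLHS]/Num.Def.normr /= mx_normrE.
by apply/bigmax_leP; split => // -[i j] _; exact: H.
Qed.

Lemma mul_entries (p k q : nat) (A : 'M[R]_(p, k)) (B : 'M[R]_(k, q)) a b :
  (forall i l, `|A i l| <= a) -> (forall l j, `|B l j| <= b) ->
  forall i j, `|(A *m B) i j| <= k%:R * (a * b).
Proof.
move=> HA HB i j; rewrite mxE.
apply: le_trans (ler_norm_sum _ _ _) _.
have -> : k%:R * (a * b) = \sum_(l < k) (a * b).
  by rewrite sumr_const card_ord mulr_natl.
apply: ler_sum => l _; rewrite normrM.
by apply: ler_pM.
Qed.

Lemma cont_bound (p q : nat) (G : 'rV[R]_p -> 'rV[R]_q) (x0 : 'rV[R]_p) :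
  continuous G -> exists r : R, 0 < r /\ forall x, `|x - x0| <= r -> `|G x| <= `|G x0| + 1.
Proof.
move=> cG.
have := @cvgr_dist_lt _ _ _ _ _ G (G x0) (cG x0) 1 (@ltr01 R).
move=> Hn; have [e /= e0 He] := iffLR (nbhs_ballP _ _) (Hn _).
exists (e / 2); split; first by rewrite divr_gt0.
move=> x hx.
have : ball x0 e x.
  rewrite -ball_normE /ball_ /=. rewrite distrC.
  by apply: le_lt_trans hx _; rewrite ltr_pdivrMr // ltr_pMr // ltr1n.
move/He => /= h.
have -> : G x = G x0 - (G x0 - G x) by rewrite opprB addrC subrK.
apply: le_trans (ler_normB _ _) _.
by rewrite lerD2l ltW.
Qed.

Lemma tr_entries p q (A : 'M[R]_(p,q)) a :
  (forall i j, `|A i j| <= a) -> forall i j, `|A^T i j| <= a.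
Proof. by move=> H i j; rewrite mxE. Qed.

Lemma prod3 p k l q (A : 'M[R]_(p,k)) (B : 'M[R]_(k,l)) (C : 'M[R]_(l,q)) a b c :
  0 <= a -> 0 <= b -> 0 <= c ->
  (forall i j, `|A i j| <= a) -> (forall i j, `|B i j| <= b) ->
  (forall i j, `|C i j| <= c) ->
  `|A *m B *m C| <= l%:R * ((k%:R * (a * b)) * c).
Proof.
move=> a0 b0 c0 HA HB HC; apply: norm_le_entries.
  by rewrite !mulr_ge0.
by apply: mul_entries => //; exact: mul_entries.
Qed.

Lemma natmul_bool_le (c : R) (b : bool) : `|c *+ b| <= `|c|.
Proof. by case: b; rewrite ?mulr1n ?mulr0n ?normr0. Qed.

Lemma eqle (a b : R) : a = b -> a <= b.
Proof. by move->. Qed.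
End H.
Arguments eqle {R} a b.
Arguments entry_le {R p q} M i j.
Arguments norm_le_entries {R p q} M c.
Arguments prod3 {R p k l q} A B C a b c.
Arguments tr_entries {R p q} A a.
Arguments natmul_bool_le {R} c b.

Theorem proposition2 (R : realType) (n me mi : nat)
  (f : 'rV[R]_n -> R) (g : 'rV[R]_n -> 'rV[R]_me) (h : 'rV[R]_n -> 'rV[R]_mi)
  (xs : 'rV[R]_n) (ss : 'rV[R]_mi) (ys : 'rV[R]_me) (zs vs : 'rV[R]_mi)
  (C alpha gamma : R) :
  (0 < mi)%N ->
  smooth (sc f) -> smooth g -> smooth h ->
  KKT_point f g h xs ss ys zs vs ->
  hess_lipschitz_near f g h xs ys zs ->
  LICQ g h xs ss ->
  strict_complementarity ss vs ->
  SOSC f g h xs ss ys zs vs ->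
  0 < C -> 0 < alpha < 1 -> 0 < gamma ->
  forall cW cH cAlo cAhi cD : R, 0 < cAlo ->
  exists K0 delta : R, 0 < delta /\
  forall (x : 'rV[R]_n) (s : 'rV[R]_mi) (y : 'rV[R]_me) (z v : 'rV[R]_mi),
    `|x - xs| <= delta -> `|s - ss| <= delta -> `|y - ys| <= delta ->
    `|z - zs| <= delta -> `|v - vs| <= delta ->
    Xi s v <= delta ->
    central f g h C alpha x s y z v ->
  forall u : R, 0 < u ->
  forall (dW : 'M[R]_n)
         (dA : 'M[R]_(#|active h xs| + me, n))
         (dD : 'M[R]_(#|active h xs| + me))
         (dHN : 'M[R]_(#|~: active h xs|, n)),
    `|dW| <= cW * u ->
    `|dHN| <= cH * u ->
    cAlo * u <= `|dA| <= cAhi * u ->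
    `|dD| <= cD * (u * sigma_bar (active h xs) gamma s) ->
    `|dK1 g h gamma x s v dW dA dD dHN|
      <= K0 * (u * sigma_bar (active h xs) gamma s).
Proof.
move=> mi0 sf sg sh [ng [ss0 [vs0 _]]] _ _ _ _ C0 al g0 cW cH cAlo cAhi cD cAlo0.
set B := active h xs.
have hss : forall i, i \notin B -> 0 < ss 0 i.
  move=> i; rewrite /B /active inE => hi.
  have : `|h xs + ss| <= 0.
    rewrite -ng /normgradL.
    by rewrite le_max [X in _ || X]le_max lexx !orbT.
  rewrite normr_le0 => /eqP e0.
  have e : (h xs + ss) 0 i = 0 by rewrite e0 mxE.
  move: e; rewrite mxE => e.
  rewrite lt_def ss0 andbT; apply: contra hi => /eqP e2.
  by move: e; rewrite e2 addr0 => ->.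
set m0 := \big[Num.min/1]_(i | i \notin B) ss 0 i.
have m0pos : 0 < m0.
  by apply/bigmin_gtP; split => //; exact: ltr01.
have m0le : forall i, i \notin B -> m0 <= ss 0 i.
  by move=> i iB; exact: bigmin_le_cond.
have [_ cg] := sg 1%N.
have [_ ch] := sh 1%N.
have [rg [rg0 Hg]] := @cont_bound _ _ _ _ xs cg.
have [rh [rh0 Hh]] := @cont_bound _ _ _ _ xs ch.
set Jg := `|mxvec (jac g xs)| + 1.
set Jh := `|mxvec (jac h xs)| + 1.
set J := Jg + Jh.
have J0 : 0 <= J by rewrite /J /Jg /Jh addr_ge0 // addr_ge0.
set delta := Num.min (Num.min (m0 / 2) 1) (Num.min rg rh).
have [dm0 [d1 [drg drh]]] : delta <= m0 / 2 /\ delta <= 1 /\ delta <= rg /\ delta <= rh.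
  by rewrite /delta !ge_min !lexx /= !orbT.
set Vb := `|vs| + 1.
have Vb1 : 1 <= Vb by rewrite /Vb lerDr.
set M1 := 2 / m0 * Vb.
have Vb0 : 0 <= Vb := le_trans ler01 Vb1.
have M10 : 0 <= M1 by rewrite /M1 mulr_ge0 // divr_ge0 // ltW.
set k1 : R := (#|B| + me)%:R.
set k2 : R := (#|~: B|)%:R.
set P := 2 * k1 * k1 * `|cAhi| * Vb * J + k1 * k1 * `|cD| * J * J.
set Q := `|cW| + 2 * (k2 * k2 * `|cH| * M1 * J).
exists (P + Q / gamma), delta; split.
  by rewrite /delta !lt_min rg0 rh0 ltr01 divr_gt0.
move=> x s y z v hx hs hy hz hv hXi [_ [spos [vpos _]]] u u0 dW dA dD dHN hW hH
  /andP[_ hA] hD.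
set sb := sigma_bar B gamma s.
have sbg : gamma <= sb by apply/bigmax_geP; left.
have sb0 : 0 < sb by apply: lt_le_trans sbg.
have sbs : forall i, i \in B -> (s 0 i)^-1 <= sb.
  by move=> i iB; apply/bigmax_geP; right; exists i.
have Jgx : forall i j, `|jac g x i j| <= J.
  move=> i j; rewrite -mxvecE. apply: le_trans (entry_le _ _ _) _.
  apply: le_trans (Hg x (le_trans hx drg)) _.
  by rewrite /J lerDl /Jh addr_ge0.
have Jhx : forall i j, `|jac h x i j| <= J.
  move=> i j; rewrite -mxvecE; apply: le_trans (entry_le _ _ _) _.
  apply: le_trans (Hh x (le_trans hx drh)) _.
  by rewrite /J lerDr /Jg addr_ge0.
have vb : forall i, `|v 0 i| <= Vb.
  move=> i; apply: le_trans (entry_le _ _ _) _.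
  have -> : v = vs + (v - vs) by rewrite addrC subrK.
  apply: le_trans (ler_normD _ _) _.
  by rewrite lerD2l (le_trans hv d1).
have sN : forall i, i \notin B -> m0 / 2 <= s 0 i.
  move=> i iB; have := entry_le (s - ss) 0 i; rewrite !mxE => e.
  have := le_trans e (le_trans hs dm0); rewrite ler_norml => /andP[e1 e2].
  have := m0le i iB; lra.
have un : forall c : R, c * u <= `|c| * u.
  by move=> c; apply: ler_wpM2r; [exact: ltW | exact: ler_norm].
have eW : forall i j, `|dW i j| <= `|cW| * u.
  by move=> i j; apply: le_trans (entry_le _ _ _) (le_trans hW (un _)).
have eH : forall i j, `|dHN i j| <= `|cH| * u.
  by move=> i j; apply: le_trans (entry_le _ _ _) (le_trans hH (un _)).
have eA : forall i j, `|dA i j| <= `|cAhi| * u.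
  by move=> i j; apply: le_trans (entry_le _ _ _) (le_trans hA (un _)).
have eD : forall i j, `|dD i j| <= `|cD| * (u * sb).
  move=> i j; apply: le_trans (entry_le _ _ _) (le_trans hD _).
  by apply: ler_wpM2r; [rewrite mulr_ge0 // ltW | exact: ler_norm].
have eAm : forall i j, `|Amat g h B x i j| <= J.
  move=> i j; rewrite /Amat -(splitK i); case: (fintype.split i) => a /=.
    by rewrite col_mxEu mxE.
  by rewrite col_mxEd.
have eHN : forall i j, `|HN h B x i j| <= J.
  by move=> i j; rewrite mxE.
have eMN : forall i j, `|MN B s v i j| <= M1.
  move=> i j; rewrite /MN mxE; apply: le_trans (natmul_bool_le _ _) _.
  rewrite !mxE.
  have iB : enum_val i \notin B by have := enum_valP i; rewrite inE.
  have sp := spos (enum_val i).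
  have si : 0 <= (s 0 (enum_val i))^-1 by rewrite invr_ge0 ltW.
  rewrite normrM (ger0_norm si).
  apply: ler_pM => //.
  have -> : 2 / m0 = (m0 / 2)^-1 by rewrite invf_div.
  rewrite lef_pV2 ?posrE ?divr_gt0 //; exact: sN.
have eDg : forall i j, `|Dg me B gamma s v i j| <= sb * Vb.
  move=> i j; rewrite /Dg -(splitK i) -(splitK j).
  case: (fintype.split i) => a; case: (fintype.split j) => b /=.
  - rewrite block_mxEul mxE; apply: le_trans (natmul_bool_le _ _) _.
    rewrite !mxE.
    have iB : enum_val a \in B by exact: enum_valP.
    have sp := spos (enum_val a).
    have si : 0 <= (s 0 (enum_val a))^-1 by rewrite invr_ge0 ltW.
    rewrite normrM (ger0_norm si).
    by apply: ler_pM => //; exact: sbs.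
  - by rewrite block_mxEur mxE normr0 mulr_ge0 // ltW.
  - by rewrite block_mxEdl mxE normr0 mulr_ge0 // ltW.
  - rewrite block_mxEdr mxE; apply: le_trans (natmul_bool_le _ _) _.
    rewrite (ger0_norm (ltW g0)); apply: le_trans sbg _.
    by rewrite ler_peMr // ltW.
have ug : u <= u * sb / gamma.
  by rewrite ler_pdivlMr // ler_pM2l.
have sb0' : 0 <= sb := ltW sb0.
have u0' : 0 <= u := ltW u0.
rewrite /dK1.
apply: le_trans (_ : `|cW| * u
   + (#|B| + me)%:R * (((#|B| + me)%:R * ((`|cAhi| * u) * (sb * Vb))) * J)
   + (#|B| + me)%:R * (((#|B| + me)%:R * (J * (sb * Vb))) * (`|cAhi| * u))
   + (#|B| + me)%:R * (((#|B| + me)%:R * (J * (`|cD| * (u * sb)))) * J)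
   + (#|~: B|)%:R * (((#|~: B|)%:R * ((`|cH| * u) * M1)) * J)
   + (#|~: B|)%:R * (((#|~: B|)%:R * (J * M1)) * (`|cH| * u)) <= _).
  apply: le_trans (ler_normD _ _) _; apply: lerD;
    last by apply: prod3 => //; rewrite ?mulr_ge0 //; exact: tr_entries.
  apply: le_trans (ler_normD _ _) _; apply: lerD;
    last by apply: prod3 => //; rewrite ?mulr_ge0 //; exact: tr_entries.
  apply: le_trans (ler_normD _ _) _; apply: lerD;
    last by apply: prod3 => //; rewrite ?mulr_ge0 //; exact: tr_entries.
  apply: le_trans (ler_normD _ _) _; apply: lerD;
    last by apply: prod3 => //; rewrite ?mulr_ge0 //; exact: tr_entries.
  apply: le_trans (ler_normD _ _) _; apply: lerD;
    last by apply: prod3 => //; rewrite ?mulr_ge0 //; exact: tr_entries.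
  by apply: norm_le_entries => //; rewrite mulr_ge0.
have Q0 : 0 <= Q.
  by rewrite /Q addr_ge0 // mulr_ge0 // mulr_ge0 // mulr_ge0 // mulr_ge0 // mulr_ge0 // ler0n.
apply: le_trans (_ : P * (u * sb) + Q * u <= _).
  by rewrite /P /Q /k1 /k2; apply: eqle; ring.
apply: le_trans (_ : P * (u * sb) + Q * (u * sb / gamma) <= _).
  by rewrite lerD2l; apply: ler_wpM2l.
by apply: eqle; ring.
Qed.
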